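(* Let $b\in(1,n)$ be an integer dividing $n$. For any $\mathbf{M}\in\mathcal{M}\mathcal{M}^{*(b,n)}$ there exist $\mathbf{L}_1,\mathbf{L}_2\in\mathcal{B}\mathcal{D}^{(n/b,n)}$ and $\mathbf{R}\in\mathcal{B}\mathcal{D}^{(b,n)}$ such that $\mathbf{M}=(\mathbf{P}_{(b,n)}^\top\mathbf{L}_1\mathbf{P}_{(b,n)})\mathbf{R}(\mathbf{P}_{(b,n)}^\top\mathbf{L}_2\mathbf{P}_{(b,n)})$.
   Context: Indices are 0-based; matrices over $\mathbb{F}\in\{\mathbb{R},\mathbb{C}\}$, $^*$ is conjugate transpose. For $c$ dividing $n$, $\mathcal{B}\mathcal{D}^{(c,n)}$ is the class of $n\times n$ block-diagonal matrices $\mathrm{diag}(\mathbf{R}_0,\dots,\mathbf{R}_{n/c-1})$ with arbitrary $c\times c$ blocks; $\mathcal{D}\mathcal{B}^{(c,n)}$ is the class of $n\times n$ matrices which, partitioned into an $(n/c)\times(n/c)$ grid of $c\times c$ blocks, have every block diagonal. $\mathcal{M}^{(b,n)}$ is the class of products $\mathbf{L}\mathbf{R}$ with $\mathbf{L}\in\mathcal{D}\mathcal{B}^{(b,n)}$, $\mathbf{R}\in\mathcal{B}\mathcal{D}^{(b,n)}$, and $\mathcal{M}\mathcal{M}^{*(b,n)}$ is the class of products $\mathbf{M}_1\mathbf{M}_2^*$ with $\mathbf{M}_1,\mathbf{M}_2\in\mathcal{M}^{(b,n)}$. For $0\le i<n$ write $i=i_1b+i_0$ with $0\le i_0<b$ and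 set $\sigma_{(b,n)}(i)=i_0\frac{n}{b}+i_1$; $\mathbf{P}_{(b,n)}$ is the permutation matrix of $\sigma_{(b,n)}$, so that $(\mathbf{P}_{(b,n)}\mathbf{X}\mathbf{P}_{(b,n)}^\top)[\sigma_{(b,n)}(i),\sigma_{(b,n)}(j)]=\mathbf{X}[i,j]$. *)

(* Defs.v *)
From HB Require Import structures.
From mathcomp Require Import all_boot all_order all_algebra.
Set Implicit Arguments. Unset Strict Implicit. Unset Printing Implicit Defensive.
Import Order.TTheory GRing.Theory Num.Theory.
Local Open Scope ring_scope.

(* The ground field F in {R, C} is modelled inside a numeric closed field C
   (e.g. algC, or R[i]): F = C when [real_only = false], and F = the real
   elements of C when [real_only = true]. *)
Definition inF (C : numClosedFieldType) (real_only : bool) (x : C) : bool :=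
  if real_only then x \is Num.real else true.

Definition mxF (C : numClosedFieldType) (real_only : bool) m n (A : 'M[C]_(m, n)) :=
  forall i j, inF real_only (A i j).

Definition ctr (C : numClosedFieldType) m n (A : 'M[C]_(m, n)) : 'M[C]_(n, m) :=
  (map_mx Num.conj A)^T.

Definition isBD (C : numClosedFieldType) (c n : nat) (A : 'M[C]_n) :=
  forall i j : 'I_n, (i %/ c)%N != (j %/ c)%N -> A i j = 0.

(* DB^(c,n): (n/c) x (n/c) grid of c x c blocks, each block diagonal *)
Definition isDB (C : numClosedFieldType) (c n : nat) (A : 'M[C]_n) :=
  forall i j : 'I_n, (i %% c)%N != (j %% c)%N -> A i j = 0.

Definition isM (C : numClosedFieldType) (real_only : bool) (b n : nat) (M : 'M[C]_n) :=
  exists (L R : 'M[C]_n), [/\ mxF real_only L, mxF real_only R,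
    isDB b L, isBD b R & M = L *m R].

Definition isMMstar (C : numClosedFieldType) (real_only : bool) (b n : nat) (M : 'M[C]_n) :=
  exists (M1 M2 : 'M[C]_n), [/\ isM real_only b M1, isM real_only b M2
    & M = M1 *m ctr M2].

Definition sigma (b n i : nat) : nat := ((i %% b) * (n %/ b) + i %/ b)%N.

(* permutation matrix of sigma: P[sigma c, c] = 1, so (P X P^T)[s i, s j] = X[i,j] *)
Definition Pmx (C : numClosedFieldType) (b n : nat) : 'M[C]_n :=
  \matrix_(r < n, c < n) ((r : nat) == sigma b n c)%:R.

(* Main.v *)
Require Import Defs.
From HB Require Import structures.
From mathcomp Require Import all_boot all_order all_algebra.
From mathcomp Require Import zify.
Import GRing.Theory Num.Theory.
Local Open Scope ring_scope.

Section Aux.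
Variables (b n : nat) (hb : (0 < b)%N) (hdiv : (b %| n)%N).

Let m := (n %/ b)%N.
Lemma n_eq : n = (m * b)%N. Proof. by rewrite /m divnK. Qed.

Lemma sigma_lt (i : 'I_n) : (sigma b n i < n)%N.
Proof.
rewrite /sigma -/m.
have hi := ltn_ord i. rewrite {2}n_eq in hi.
have h1 : (i %/ b < m)%N by rewrite ltn_divLR.
have h2 : (i %% b < b)%N by rewrite ltn_mod.
have hn := n_eq.
have : (i %% b * m <= (b - 1) * m)%N by apply: leq_mul => //; lia.
nia.
Qed.

Definition sig_ord (i : 'I_n) : 'I_n := Ordinal (sigma_lt i).

Lemma sigma_div (i : 'I_n) : (sigma b n i %/ m)%N = (i %% b)%N.
Proof.
have hi := ltn_ord i. rewrite {2}n_eq in hi.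
have h1 : (i %/ b < m)%N by rewrite ltn_divLR.
rewrite /sigma -/m divnMDl; last by case: m h1.
by rewrite divn_small // addn0.
Qed.

Lemma sigma_mod (i : 'I_n) : (sigma b n i %% m)%N = (i %/ b)%N.
Proof.
have hi := ltn_ord i. rewrite {2}n_eq in hi.
have h1 : (i %/ b < m)%N by rewrite ltn_divLR.
by rewrite /sigma -/m modnMDl modn_small.
Qed.

Lemma sig_inj : injective sig_ord.
Proof.
move=> i j /(congr1 val) /= e.
apply/val_inj => /=.
rewrite (divn_eq i b) (divn_eq j b) -sigma_div -sigma_mod -sigma_div -sigma_mod.
by rewrite e.
Qed.

Definition tau := invF sig_inj.
Lemma sig_tau r : sig_ord (tau r) = r. Proof. exact: f_invF. Qed.
Lemma tau_sig r : tau (sig_ord r) = r. Proof. exact: invF_f. Qed.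

End Aux.
Arguments sig_ord {b n} hb hdiv i.
Arguments tau {b n} hb hdiv _.
Arguments sig_tau {b n} hb hdiv r.
Arguments tau_sig {b n} hb hdiv r.
Arguments sigma_div {b n} hb hdiv i.

Lemma sum_pick (C : numClosedFieldType) n (a : 'I_n) (F : 'I_n -> C) :
  \sum_(r : 'I_n) (((r : nat) == a)%:R * F r) = F a.
Proof.
rewrite (bigD1 a) //= eqxx mul1r big1 ?addr0 // => r /negbTE.
by rewrite val_eqE => ->; rewrite mul0r.
Qed.

Arguments sum_pick {C n} a F.
Lemma sum_pick' (C : numClosedFieldType) n (a : 'I_n) (F : 'I_n -> C) :
  \sum_(r : 'I_n) (F r * ((r : nat) == a)%:R) = F a.
Proof.
rewrite -[RHS](sum_pick a F); apply: eq_bigr => r _; by rewrite mulrC.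
Qed.

Arguments sum_pick' {C n} a F.
Lemma conj_back (C : numClosedFieldType) b n (hb : (0 < b)%N) (hdiv : (b %| n)%N)
  (L : 'M[C]_n) :
  (Pmx C b n)^T *m (\matrix_(r, c) L (tau hb hdiv r) (tau hb hdiv c)) *m Pmx C b n = L.
Proof.
apply/matrixP => i j.
have hc : forall c, ((Pmx C b n)^T *m (\matrix_(r, c) L (tau hb hdiv r) (tau hb hdiv c))) i c
   = L i (tau hb hdiv c).
  move=> c; rewrite !mxE.
  under eq_bigr => r _ do rewrite !mxE.
  have := sum_pick (sig_ord hb hdiv i) (fun r => L (tau hb hdiv r) (tau hb hdiv c)).
  by rewrite /= tau_sig.
rewrite [LHS]mxE.
under eq_bigr => r _ do rewrite hc [Pmx _ _ _ _ _]mxE.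
have := sum_pick' (sig_ord hb hdiv j) (fun r => L i (tau hb hdiv r)).
by rewrite /= tau_sig.
Qed.

Lemma blockL (C : numClosedFieldType) b n (hb : (0 < b)%N) (hdiv : (b %| n)%N)
  (L : 'M[C]_n) : isDB b L -> isBD (n %/ b) (\matrix_(r, c) L (tau hb hdiv r) (tau hb hdiv c)).
Proof.
move=> hL r c hrc; rewrite mxE; apply: hL.
by rewrite -(sig_tau hb hdiv r) -(sig_tau hb hdiv c) /= !sigma_div in hrc.

Qed.

Arguments blockL {C b n} hb hdiv L.
Arguments conj_back {C b n} hb hdiv L.
Lemma inF_mul (C : numClosedFieldType) ro (x y : C) : inF ro x -> inF ro y -> inF ro (x * y).
Proof. by case: ro => //= ; apply: rpredM. Qed.

Lemma inF_sum (C : numClosedFieldType) ro n (F : 'I_n -> C) :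
  (forall i, inF ro (F i)) -> inF ro (\sum_i F i).
Proof. case: ro => //= h; by apply: rpred_sum => i _; apply: h. Qed.

Lemma inF_conj (C : numClosedFieldType) ro (x : C) : inF ro x -> inF ro (x^*).
Proof. by case: ro => //= h; rewrite conj_Creal. Qed.

Lemma ctr_mul (C : numClosedFieldType) n (A B : 'M[C]_n) : ctr (A *m B) = ctr B *m ctr A.
Proof. by rewrite /ctr map_mxM trmx_mul. Qed.

Theorem propositionC11 (C : numClosedFieldType) (real_only : bool) (b n : nat)
  (hb1 : (1 < b)%N) (hbn : (b < n)%N) (hdiv : (b %| n)%N) (M : 'M[C]_n) :
  isMMstar real_only b M ->
  exists (L1 L2 R : 'M[C]_n),
    [/\ mxF real_only L1, mxF real_only L2 & mxF real_only R] /\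
    [/\ isBD (n %/ b) L1, isBD (n %/ b) L2 & isBD b R] /\
        M = ((Pmx C b n)^T *m L1 *m Pmx C b n) *m R *m ((Pmx C b n)^T *m L2 *m Pmx C b n).
Proof.
have hb : (0 < b)%N by apply: ltnW.
case=> M1 [M2 [[A1 [R1 [fA1 fR1 dA1 bR1 ->]]] [A2 [R2 [fA2 fR2 dA2 bR2 ->]]] ->]].
set T := tau hb hdiv.
exists (\matrix_(r, c) A1 (T r) (T c)), (\matrix_(r, c) (ctr A2) (T r) (T c)),
  (R1 *m ctr R2).
split; [split|split; [split|]].
- by move=> i j; rewrite mxE.
- by move=> i j; rewrite !mxE; apply: inF_conj.
- move=> i j; rewrite mxE; apply: inF_sum => k; apply: inF_mul => //.
  by rewrite !mxE; apply: inF_conj.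
- exact: blockL.
- apply: blockL => i j hij; rewrite !mxE (dA2 j i) ?rmorph0 //; by rewrite eq_sym.
- move=> i j hij; rewrite mxE big1 // => k _; rewrite !mxE.
  case: (eqVneq (i %/ b)%N (k %/ b)%N) => e.
  + by rewrite (bR2 j k) ?rmorph0 ?mulr0 // -e eq_sym.
  + by rewrite bR1 ?mul0r.
- rewrite !conj_back ctr_mul !mulmxA //.
Qed.
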